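(* Let $I\subseteq\mathbb{R}$ be an interval, let $f:I\to\mathbb{R}$ be differentiable on the interior $I^{\circ}$, let $a,b\in I^{\circ}$ with $a<b$, assume $f'\in L[a,b]$, and let $\alpha,\lambda\in[0,1]$. Suppose that $|f'|^{q}$ is $s$-concave on $[a,b]$ for some fixed $s\in(0,1]$ and some $q>1$, and let $p$ satisfy $\frac1p+\frac1q=1$. Define $$I_f(\lambda,\alpha,a,b)=\lambda\big(\alpha f(a)+(1-\alpha)f(b)\big)+(1-\lambda)f(\alpha a+(1-\alpha)b)-\frac{1}{b-a}\int_a^b f(x)\,dx,$$ $$E_f(\alpha,q)=(1-\alpha)\left|f'\!\left(\tfrac{(1-\alpha)b+(1+\alpha)a}{2}\right)\right|^q,\qquad F_f(\alpha,q)=\alpha\left|f'\!\left(\tfrac{(2-\alpha)b+\alpha a}{2}\right)\right|^q,$$ $$\varepsilon_1(\alpha,\lambda,p)=(\alpha\lambda)^{p+1}+(1-\alpha-\alpha\lambda)^{p+1},\qquad \varepsilon_2(\alpha,\lambda,p)=(\alpha\lambda)^{p+1}-(\alpha\lambda-1+\alpha)^{p+1}.$$ Then $|I_f(\lambda,\alpha,a,b)|\leq (b-a)\,2^{\frac{s-1}{q}}\left(\frac{1}{p+1}\right)^{1/p}\cdot K$, where $K=\varepsilon_1^{1/p}(\alpha,\lambda,p)E_f^{1/q}(\alpha,q)+\varepsilon_1^{1/p}(1-\alpha,\lambda,p)F_f^{1/q}(\alpha,q)$ if $\alpha\lambda\leq 1-\alpha\leq 1-\lambda(1-\alpha)$;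 $K=\varepsilon_1^{1/p}(\alpha,\lambda,p)E_f^{1/q}(\alpha,q)+\varepsilon_2^{1/p}(1-\alpha,\lambda,p)F_f^{1/q}(\alpha,q)$ if $\alpha\lambda\leq 1-\lambda(1-\alpha)\leq 1-\alpha$; $K=\varepsilon_2^{1/p}(\alpha,\lambda,p)E_f^{1/q}(\alpha,q)+\varepsilon_1^{1/p}(1-\alpha,\lambda,p)F_f^{1/q}(\alpha,q)$ if $1-\alpha\leq\alpha\lambda\leq 1-\lambda(1-\alpha)$.
   Context: For a fixed $s\in(0,1]$, a function $g:[a,b]\to[0,\infty)$ is called $s$-concave (in the second sense) on $[a,b]$ if $g(\theta x+(1-\theta)y)\geq \theta^{s}g(x)+(1-\theta)^{s}g(y)$ for all $x,y\in[a,b]$ and all $\theta\in[0,1]$. *)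

(* Defs.v *)
From HB Require Import structures.
From mathcomp Require Import all_boot all_order all_algebra.
From mathcomp Require Import all_classical all_reals all_analysis.
Set Implicit Arguments. Unset Strict Implicit. Unset Printing Implicit Defensive.
Import Order.TTheory GRing.Theory Num.Theory.
Import numFieldNormedType.Exports.
Local Open Scope classical_set_scope.
Local Open Scope ring_scope.

Definition s_concave (R : realType) (s : R) (g : R -> R) (a b : R) : Prop :=
  (forall x, x \in `[a, b] -> 0 <= g x) /\
  (forall x y t, x \in `[a, b] -> y \in `[a, b] -> 0 <= t <= 1 ->
     t `^ s * g x + (1 - t) `^ s * g y <= g (t * x + (1 - t) * y)).

Definition I_f (R : realType) (f : R -> R) (lam al a b : R) : R :=
  lam * (al * f a + (1 - al) * f b) + (1 - lam) * f (al * a + (1 - al) * b)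
  - (b - a)^-1 * Rintegral lebesgue_measure `[a, b] f.

Definition E_f (R : realType) (f : R -> R) (a b al q : R) : R :=
  (1 - al) * `| derive1 f (((1 - al) * b + (1 + al) * a) / 2) | `^ q.

Definition F_f (R : realType) (f : R -> R) (a b al q : R) : R :=
  al * `| derive1 f (((2 - al) * b + al * a) / 2) | `^ q.

Definition eps1 (R : realType) (al lam p : R) : R :=
  (al * lam) `^ (p + 1) + (1 - al - al * lam) `^ (p + 1).

Definition eps2 (R : realType) (al lam p : R) : R :=
  (al * lam) `^ (p + 1) - (al * lam - 1 + al) `^ (p + 1).

(* Main.v *)
Require Import Defs.
From HB Require Import structures.
From mathcomp Require Import all_boot all_order all_algebra.
From mathcomp Require Import all_classical all_reals all_analysis.
From mathcomp Require Import ring lra.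
Import Order.TTheory GRing.Theory Num.Theory.
Import numFieldNormedType.Exports.
Local Open Scope classical_set_scope.
Local Open Scope ring_scope.

Section Aux.
Context {R : realType}.

Lemma abspow_cvg0 (p : R) : 0 < p -> (fun u : R => `|u| `^ p) @ (0:R)^' --> (0:R).
Proof.
move=> p0; apply/cvgr0Pnorm_lt => e e0.
have e1 : 0 < e `^ p^-1 by rewrite powR_gt0.
near=> u.
have hu : `|u| < e `^ p^-1 by near: u; exact: dnbhs0_lt.
rewrite ger0_norm ?powR_ge0//.
have := gt0_ltr_powR p0 _ _ hu; rewrite -powRrM mulVf ?gt_eqF// powRr1 ?ltW//.
apply; by rewrite nnegrE ?powR_ge0.
Unshelve. all: by end_near. Qed.

Definition spow (p u : R) := u * `|u| `^ p.

Lemma is_derive_spow (p u : R) : 0 < p ->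
  is_derive u 1 (spow p) ((p + 1) * `|u| `^ p).
Proof.
move=> p0.
have [u0|u0|->] := ltgtP u 0.
-
  have E : \near u, (fun v => - ((- v) `^ (p + 1))) u = spow p u.
    near=> v. have v0 : v < 0 by near: v; exact: lt_nbhsl.
    rewrite /spow ltr0_norm// -(@mulr_powRB1 _ (- v) (p + 1)) ?oppr_ge0 ?ltW// ?addrK ?mulNr ?opprK//.
    by rewrite ltr_wpDl ?ltW.
  apply: near_eq_is_derive E _.
  have h1 : is_derive u 1 (fun v => (- v)) (-1) by apply: is_deriveN.
  have h2 : is_derive (- u) 1 (fun v : R => v `^ (p + 1)) ((p + 1) * (- u) `^ (p + 1 - 1)).
    by apply: (@is_derive1_powR R); rewrite oppr_gt0.
  have h3 := is_derive1_comp h2 h1.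
  have := is_deriveN h3; rewrite /comp addrK ltr0_norm// => H.
  by apply: is_derive_eq H _; rewrite mulrN1 opprK.
- have E : \near u, (fun v => (v `^ (p + 1))) u = spow p u.
    near=> v. have v0 : 0 < v by near: v; exact: lt_nbhsr.
    rewrite /spow gtr0_norm// -(@mulr_powRB1 _ v (p + 1)) ?ltW// ?addrK//.
    by rewrite ltr_wpDl ?ltW.
  apply: near_eq_is_derive E _.
  by rewrite gtr0_norm//; have := @is_derive1_powR R (p + 1) u u0; rewrite addrK.
- rewrite normr0 powR0 ?gt_eqF// mulr0.
  have L : (fun h : R => h^-1 *: ((spow p \o shift 0) (h *: 1) - spow p 0)) @ 0^' --> (0:R).
    apply: cvg_trans (abspow_cvg0 p p0); apply: near_eq_cvg; near=> h.
    have h0 : h != 0 by near: h; exact: nbhs_dnbhs_neq.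
    by rewrite /= /spow addr0 mul0r subr0 [_%:A]mulr1 -[_ *: _]/(h^-1 * (h * _)) mulrA mulVf // mul1r.
  split; first by apply/cvg_ex; exists 0.
  by rewrite /derive; apply/cvg_lim.
Unshelve. all: by end_near. Qed.
Lemma mono_bound (U V u' v' : R -> R) (x0 x1 : R) : x0 <= x1 ->
  {within `[x0, x1], continuous U} -> {within `[x0, x1], continuous V} ->
  (forall y, y \in `]x0, x1[ -> is_derive y 1 U (u' y)) ->
  (forall y, y \in `]x0, x1[ -> is_derive y 1 V (v' y)) ->
  (forall y, y \in `]x0, x1[ -> `|u' y| <= v' y) ->
  `|U x1 - U x0| <= V x1 - V x0.
Proof.
move=> x01 cU cV dU dV uv.
have i0 : x0 \in `[x0, x1] by rewrite in_itv/= lexx x01.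
have i1 : x1 \in `[x0, x1] by rewrite in_itv/= lexx x01.
have h1 : (V - U) x0 <= (V - U) x1.
  apply: (@ger0_derive1_le_cc _ _ x0 x1) => //.
  - by move=> y /[dup] yi /dU [dU' _]; have [dV' _] := dV y yi; exact: derivableB.
  - move=> y yi; rewrite derive1E; have := is_deriveB (dV y yi) (dU y yi) => -[_ ->].
    by have := uv y yi; rewrite ler_norml => /andP[? ?]; lra.
  - apply/subspace_continuousP => y yi; apply: cvgB.
    + by move/subspace_continuousP : cV; exact.
    + by move/subspace_continuousP : cU; exact.
have h2 : (V + U) x0 <= (V + U) x1.
  apply: (@ger0_derive1_le_cc _ _ x0 x1) => //.
  - by move=> y /[dup] yi /dU [dU' _]; have [dV' _] := dV y yi; exact: derivableD.
  - move=> y yi; rewrite derive1E; have := is_deriveD (dV y yi) (dU y yi) => -[_ ->].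
    by have := uv y yi; rewrite ler_norml => /andP[? ?]; lra.
  - apply/subspace_continuousP => y yi; apply: cvgD.
    + by move/subspace_continuousP : cV; exact.
    + by move/subspace_continuousP : cU; exact.
move: h1 h2; rewrite !fctE => h1 h2.
rewrite ler_norml; apply/andP; split; lra.
Qed.

Lemma spow_lt (p u v : R) : 0 < p -> u < v -> spow p u < spow p v.
Proof.
move=> p0 uv; rewrite /spow.
have [u0|u0] := leP 0 u.
  have v0 : 0 < v by exact: le_lt_trans uv.
  rewrite (ger0_norm u0) (ger0_norm (ltW v0)).
  have : u `^ p <= v `^ p.
    by apply: ge0_ler_powR; rewrite ?nnegrE ?(ltW p0) ?(ltW v0) ?(ltW uv).
  have : 0 < v `^ p by rewrite powR_gt0.
  have : 0 <= u `^ p by rewrite powR_ge0.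
  move=> h1 h2 h3; nra.
have [v1|v1] := leP 0 v.
  rewrite (ltr0_norm u0) ger0_norm//.
  have : 0 < (- u) `^ p by rewrite powR_gt0// oppr_gt0.
  have : 0 <= v `^ p by rewrite powR_ge0.
  move=> h1 h2; nra.
rewrite !ltr0_norm//.
have : (- v) `^ p <= (- u) `^ p.
  by apply: ge0_ler_powR; rewrite ?nnegrE ?oppr_ge0 ?(ltW p0) ?(ltW v1) ?(ltW u0) ?lerN2 ?(ltW uv).
have : 0 < (- u) `^ p by rewrite powR_gt0// oppr_gt0.
have : 0 <= (- v) `^ p by rewrite powR_ge0.
move=> h1 h2 h3; nra.
Qed.

Lemma powRV (x r : R) : 0 <= x -> (x^-1) `^ r = (x `^ r)^-1.
Proof.
rewrite le_eqVlt => /predU1P[<-|x0].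
  rewrite invr0; have [->|r0] := eqVneq r 0; first by rewrite powRr0 invr1.
  by rewrite powR0// invr0.
by rewrite -powR_inv1 ?ltW// -powRrM mulN1r powRN.
Qed.

Lemma derivable_within_cont (f : R -> R) (A : set R) :
  (forall y, derivable f y 1) -> {within A, continuous f}.
Proof.
move=> df; apply/continuous_subspaceT=> r.
exact/differentiable_continuous/derivable1_diffP.
Qed.


Lemma piece (p q : R) (U d : R -> R) (x0 x1 z D M s : R) :
  1 < q -> p^-1 + q^-1 = 1 ->
  0 < D -> x0 < x1 ->
  {within `[x0, x1], continuous U} ->
  (forall y, y \in `]x0, x1[ -> is_derive y 1 U ((y - z) / D * d y)) ->
  (forall y, y \in `]x0, x1[ -> `|d y| `^ q <= M + s * (y - (x0 + x1) / 2)) ->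
  0 <= M ->
  `|U x1 - U x0| <= (D / (p + 1) * (spow p ((x1 - z) / D) - spow p ((x0 - z) / D))) `^ (1 / p)
                     * ((x1 - x0) * M) `^ (1 / q).
Proof.
move=> q1 pq D0 x01 cU dU gb M0.
have q0 : 0 < q by apply: lt_trans q1.
have p0 : 0 < p.
  have : 0 < p^-1 by rewrite -[p^-1](addrK q^-1) pq subr_gt0 invf_lt1.
  by rewrite invr_gt0.
set mid := (x0 + x1) / 2.
have [M00|Mpos] := eqVneq M 0.
  have d0 : forall y, y \in `]x0, x1[ -> d y = 0.
    move=> y yi.
    have y'i : x0 + x1 - y \in `]x0, x1[.
      by move: yi; rewrite !in_itv/= => /andP[? ?]; apply/andP; split; lra.
    have g1 := gb y yi; have g2 := gb _ y'i.
    have h1 : 0 <= `|d y| `^ q by rewrite powR_ge0.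
    have h2 : 0 <= `|d (x0 + x1 - y)| `^ q by rewrite powR_ge0.
    have : `|d y| `^ q = 0.
      apply/eqP; rewrite eq_le h1 andbT.
      move: g1 g2; rewrite M00 !add0r => g1 g2.
      have : s * (x0 + x1 - y - (x0 + x1) / 2) = - (s * (y - (x0 + x1) / 2)) by field.
      lra.
    by move/powR_eq0_eq0/normr0_eq0.
  have := @mono_bound U (cst 0) (fun y => (y - z) / D * d y) (cst 0) x0 x1 (ltW x01) cU.
  rewrite /cst subrr M00 mulr0 powR0 ?mulr0; last by rewrite div1r invr_eq0 gt_eqF.
  apply => //.
  - by apply: derivable_within_cont => y; exact: derivable_cst.
  - by move=> y yi; rewrite d0 // mulr0 normr0.
have {}Mpos : 0 < M by rewrite lt_neqAle eq_sym Mpos M0.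
set Pf := fun y => D / (p + 1) * spow p ((y - z) / D).
have dPf : forall y : R, is_derive y (1:R) Pf (`|(y - z) / D| `^ p).
  move=> y.
  have h1 : is_derive y (1:R) (fun y : R => (y - z) / D) (D^-1).
    have h0 := is_deriveM (is_deriveB (is_derive_id y (1:R)) (is_derive_cst z y (1:R))) (is_derive_cst D^-1 y (1:R)).
    apply: is_derive_eq h0 _.
    by rewrite /GRing.scale /= mulr0 add0r subr0 mulr1.
  have h2 := @is_derive1_comp _ (spow p) (fun y : R => (y - z) / D) y _ _ (is_derive_spow p ((y - z) / D) p0) h1.
  have h3 := is_deriveZ (D / (p + 1)) h2.
  apply: is_derive_eq h3 _.
  rewrite /GRing.scale /=; field.
  by rewrite !gt_eqF// addr_gt0.
set A := D / (p + 1) * _.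
have Apos : 0 < A.
  apply: mulr_gt0; first by rewrite divr_gt0// addr_gt0.
  rewrite subr_gt0 spow_lt// ltr_pM2r ?invr_gt0//.
  by rewrite ltrBlDr subrK.
set B := (x1 - x0) * M.
have Bpos : 0 < B by rewrite /B mulr_gt0// subr_gt0.
set a' := A `^ (1 / p).
set b' := B `^ (1 / q).
have a'pos : 0 < a' by rewrite powR_gt0.
have b'pos : 0 < b' by rewrite powR_gt0.
have aP : a' `^ p = A by rewrite /a' -powRrM div1r mulVf ?gt_eqF// powRr1// ltW.
have bP : b' `^ q = B by rewrite /b' -powRrM div1r mulVf ?gt_eqF// powRr1// ltW.
pose L := fun y : R => M * y + s / 2 * ((y - mid) * (y - mid)).
have dL : forall y : R, is_derive y (1:R) L (M + s * (y - mid)).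
  move=> y.
  have hm := is_deriveB (is_derive_id y (1:R)) (is_derive_cst mid y (1:R)).
  have h0 := is_deriveD (is_deriveM (is_derive_cst M y (1:R)) (is_derive_id y (1:R)))
     (is_deriveM (is_derive_cst (s / 2) y (1:R)) (is_deriveM hm hm)).
  apply: is_derive_eq h0 _.
  by rewrite /GRing.scale /= /cst /= !fctE /=; field.
pose V := fun y : R => a' * b' * (Pf y / (p * A) + L y / (q * B)).
pose v' := fun y : R => a' * b' * (`|(y - z) / D| `^ p / (p * A) + (M + s * (y - mid)) / (q * B)).
have dV : forall y : R, is_derive y (1:R) V (v' y).
  move=> y.
  have h0 := is_deriveM (is_derive_cst (a' * b') y (1:R))
     (is_deriveD (is_deriveM (dPf y) (is_derive_cst (p * A)^-1 y (1:R)))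
                 (is_deriveM (dL y) (is_derive_cst (q * B)^-1 y (1:R)))).
  apply: is_derive_eq h0 _.
  rewrite /v' /GRing.scale /= /cst /= !fctE /=; field.
  by rewrite !gt_eqF// mulr_gt0.
have := @mono_bound U V (fun y => (y - z) / D * d y) v' x0 x1 (ltW x01) cU.
have -> : V x1 - V x0 = a' * b'.
  have -> : V x1 - V x0 = a' * b' * ((Pf x1 - Pf x0) / (p * A) + (L x1 - L x0) / (q * B)).
    by rewrite /V; field; rewrite !gt_eqF// mulr_gt0.
  have -> : Pf x1 - Pf x0 = A by rewrite /Pf /A mulrBr.
  have -> : L x1 - L x0 = B by rewrite /L /B /mid; field.
  have -> : A / (p * A) + B / (q * B) = 1.
    by rewrite -pq; field; rewrite !gt_eqF.
  by rewrite mulr1.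
apply => //.
- by apply: derivable_within_cont => y; have [] := dV y.
- move=> y yi.
  set K := (y - z) / D.
  have Y := @conjugate_powR _ (`|K| / a') (`|d y| / b') p q
    (divr_ge0 (normr_ge0 _) (ltW a'pos)) (divr_ge0 (normr_ge0 _) (ltW b'pos)) p0 q0 pq.
  rewrite !powRM ?invr_ge0 ?(ltW a'pos) ?(ltW b'pos) // !powRV ?(ltW a'pos) ?(ltW b'pos) // aP bP in Y.
  have E : `|K * d y| = a' * b' * ((`|K| / a') * (`|d y| / b')).
    by rewrite normrM; field; rewrite !gt_eqF.
  rewrite E /v'; apply: ler_wpM2l; first by rewrite mulr_ge0 ?ltW.
  apply: (le_trans Y).
  have -> : `|K| `^ p * A^-1 / p = `|K| `^ p / (p * A) by field; rewrite !gt_eqF.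
  rewrite lerD2l.
  have -> : `|d y| `^ q * B^-1 / q = `|d y| `^ q / (q * B) by field; rewrite !gt_eqF.
  rewrite ler_pM2r ?invr_gt0 ?mulr_gt0 ?subr_gt0//; exact: gb.
Qed.


Lemma slope3 (g : R -> R) (x0 x1 x m y : R) :
  (forall u v t, u \in `[x0, x1] -> v \in `[x0, x1] -> 0 <= t <= 1 ->
     t * g u + (1 - t) * g v <= g (t * u + (1 - t) * v)) ->
  x \in `[x0, x1] -> y \in `[x0, x1] -> x < m -> m < y ->
  (g y - g m) / (y - m) <= (g m - g x) / (m - x).
Proof.
move=> cg xi yi xm my.
have yx : 0 < y - x by lra.
set t := (y - m) / (y - x).
have t01 : 0 <= t <= 1.
  apply/andP; split; first by apply: divr_ge0; lra.
  by rewrite ler_pdivrMr// mul1r; lra.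
have c := cg x y t xi yi t01.
have E : t * x + (1 - t) * y = m by rewrite /t; field; rewrite gt_eqF.
rewrite E in c.
have c' : (y - m) * g x + (m - x) * g y <= (y - x) * g m.
  have := ler_wpM2l (ltW yx) c.
  have -> : (y - x) * (t * g x + (1 - t) * g y) = (y - m) * g x + (m - x) * g y.
    by rewrite /t; field; rewrite gt_eqF.
  done.
rewrite ler_pdivrMr ?subr_gt0// mulrAC ler_pdivlMr ?subr_gt0//.
nra.
Qed.

Arguments slope3 {g x0 x1 x m y}.

Lemma supergrad (g : R -> R) (x0 x1 : R) : x0 < x1 ->
  (forall u v t, u \in `[x0, x1] -> v \in `[x0, x1] -> 0 <= t <= 1 ->
     t * g u + (1 - t) * g v <= g (t * u + (1 - t) * v)) ->
  exists s, forall y, y \in `[x0, x1] ->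
    g y <= g ((x0 + x1) / 2) + s * (y - (x0 + x1) / 2).
Proof.
move=> x01 cg.
set m := (x0 + x1) / 2.
have x0m : x0 < m by rewrite /m; lra.
have mx1 : m < x1 by rewrite /m; lra.
have i0 : x0 \in `[x0, x1] by rewrite in_itv/= lexx ltW.
have i1 : x1 \in `[x0, x1] by rewrite in_itv/= lexx ltW.
pose S := [set (g y - g m) / (y - m) | y in [set y | y \in `[x0, x1] /\ m < y]].
have ubS : ubound S ((g m - g x0) / (m - x0)).
  by move=> _ [y [yi my] <-]; exact: (slope3 cg i0 yi x0m my).
have hS : has_sup S.
  split; first by exists ((g x1 - g m) / (x1 - m)), x1.
  by exists ((g m - g x0) / (m - x0)).
exists (sup S) => y yi.
have [ym|my|->] := ltgtP y m; last by rewrite subrr mulr0 addr0.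
- have ub : ubound S ((g m - g y) / (m - y)).
    by move=> _ [w [wi mw] <-]; exact: (slope3 cg yi wi ym mw).
  have := ge_sup (proj1 hS) ub.
  rewrite ler_pdivlMr ?subr_gt0// => h.
  have : sup S * (y - m) = - (sup S * (m - y)) by ring.
  lra.
- have : (g y - g m) / (y - m) <= sup S.
    by apply: sup_upper_bound => //; exists y.
  rewrite ler_pdivrMr ?subr_gt0// => h.
  lra.
Qed.


Lemma int_seg (I : set R) a b y : is_interval I -> interior I a -> interior I b ->
  a <= y <= b -> interior I y.
Proof.
move=> HI /nbhs_ballP [ea /= ea0 Ba] /nbhs_ballP [eb /= eb0 Bb] /andP[ay yb].
have Ia : I a by apply: Ba; exact: ballxx.
have Ib : I b by apply: Bb; exact: ballxx.
apply/nbhs_ballP; exists (Num.min ea eb) => /=; first by rewrite lt_min ea0 eb0.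
move=> z; rewrite /ball /= lt_min => /andP[h1 h2].
move: h1 h2; rewrite !ltr_norml => /andP[h1 h1'] /andP[h2 h2'].
have [za|az] := ltP z a.
  by apply: Ba; rewrite /ball /= ger0_norm ?subr_ge0 ?ltW//; lra.
have [bz|zb] := ltP b z.
  by apply: Bb; rewrite /ball /= ler0_norm ?subr_le0 ?ltW//; lra.
by apply: (HI a b) => //; rewrite az zb.
Qed.

Lemma Uderiv (f F : R -> R) (z D y df : R) : D != 0 ->
  is_derive y (1:R) f df -> is_derive y (1:R) F (f y) ->
  is_derive y (1:R) (fun y => (y - z) / D * f y - F y / D) ((y - z) / D * df).
Proof.
move=> D0 hf hF.
have hm := is_deriveM (is_deriveB (is_derive_id y (1:R)) (is_derive_cst z y (1:R)))
           (is_derive_cst D^-1 y (1:R)).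
have h0 := is_deriveB (is_deriveM hm hf) (is_deriveM hF (is_derive_cst D^-1 y (1:R))).
apply: is_derive_eq h0 _.
by rewrite /GRing.scale /= /cst /= !fctE /=; field.
Qed.

Lemma Ucont (f F : R -> R) (z D : R) (A : set R) :
  {within A, continuous f} -> {within A, continuous F} ->
  {within A, continuous (fun y => (y - z) / D * f y - F y / D)}.
Proof.
move=> cf cF; apply/subspace_continuousP => y yA.
apply: cvgB; apply: cvgM.
- apply: cvgM; last exact: cvg_cst.
  apply: cvgB; last exact: cvg_cst.
  by apply: cvg_within_filter; exact: cvg_id.
- by move/subspace_continuousP : cf; exact.
- by move/subspace_continuousP : cF; exact.
- exact: cvg_cst.
Qed.

Lemma spow_pos (p u : R) : 0 < p -> 0 <= u -> spow p u = u `^ (p + 1).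
Proof.
move=> p0 u0; rewrite /spow ger0_norm// -(@mulr_powRB1 _ u (p + 1)) ?addrK//.
by rewrite ltr_wpDl ?ltW.
Qed.

Lemma spow_neg (p u : R) : 0 < p -> u <= 0 -> spow p u = - ((- u) `^ (p + 1)).
Proof.
move=> p0 u0; rewrite /spow ler0_norm// -(@mulr_powRB1 _ (- u) (p + 1)) ?addrK ?oppr_ge0//.
  by rewrite mulNr opprK.
by rewrite ltr_wpDl ?ltW.
Qed.

Lemma le_powRs (t s : R) : 0 <= t <= 1 -> 0 < s <= 1 -> t <= t `^ s.
Proof.
move=> /andP[t0 t1] /andP[s0 s1].
have [->|tp] := eqVneq t 0; first by rewrite powR_ge0.
by apply: ger1_powR => //; rewrite t1 andbT lt_neqAle eq_sym tp.
Qed.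

Lemma piece_fin (p q D e w m : R) : 1 < q -> p^-1 + q^-1 = 1 -> 0 < D ->
  0 <= e -> 0 <= w -> 0 <= m ->
  (D / (p + 1) * e) `^ (1 / p) * ((w * D) * m) `^ (1 / q) =
  D * (1 / (p + 1)) `^ (1 / p) * (e `^ (1 / p) * (w * m) `^ (1 / q)).
Proof.
move=> q1 pq D0 e0 w0 m0.
have q0 : 0 < q by apply: lt_trans q1.
have p0 : 0 < p.
  have : 0 < p^-1 by rewrite -[p^-1](addrK q^-1) pq subr_gt0 invf_lt1.
  by rewrite invr_gt0.
have p1 : 0 <= 1 / (p + 1) by rewrite divr_ge0// addr_ge0// ltW.
have E1 : D / (p + 1) * e = D * (1 / (p + 1) * e) by rewrite div1r mulrA.
have E2 : w * D * m = D * (w * m) by ring.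
have DD : D `^ (1 / p) * D `^ (1 / q) = D.
  by rewrite -powRD ?(gt_eqF D0) ?implybT// !div1r pq powRr1// ltW.
rewrite E1 E2 (@powRM _ D _ (1 / p)) ?(@powRM _ D _ (1 / q)) ?mulr_ge0 ?(ltW D0)//.
transitivity (D `^ (1 / p) * D `^ (1 / q) * ((1 / (p + 1)) `^ (1 / p) * (e `^ (1 / p) * (w * m) `^ (1 / q)))).
  by rewrite (@powRM _ (1 / (p + 1))) //; ring.
by rewrite DD mulrA.
by rewrite invr_ge0 addr_ge0 ?ltW.
Qed.

Lemma lt_powRs (t s : R) : 0 < t < 1 -> 0 < s < 1 -> t < t `^ s.
Proof.
move=> /andP[t0 t1] /andP[s0 s1].
rewrite /powR gt_eqF// -{1}(@lnK _ t) ?posrE// ltr_expR.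
have := @ln_lt0 _ t; rewrite t0 t1 => /(_ isT) lt0.
nra.
Qed.

End Aux.

Lemma mid_in {R : realType} (a b x y : R) : a <= x -> x <= y -> y <= b -> (x + y) / 2 \in `[a, b].
Proof. by move=> ax xy yb; rewrite in_itv/=; apply/andP; split; lra. Qed.

Theorem theorem2p5 (R : realType) (I : set R) (f : R -> R) (a b al lam s p q : R) :
  is_interval I ->
  (forall x, interior I x -> derivable f x 1) ->
  interior I a -> interior I b -> a < b ->
  lebesgue_measure.-integrable `[a, b] (fun x => (derive1 f x)%:E) ->
  0 <= al <= 1 -> 0 <= lam <= 1 ->
  0 < s <= 1 -> 1 < q -> p^-1 + q^-1 = 1 ->
  s_concave s (fun x => `| derive1 f x | `^ q) a b ->
  let C := (b - a) * 2 `^ ((s - 1) / q) * (1 / (p + 1)) `^ (1 / p) in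
  (al * lam <= 1 - al <= 1 - lam * (1 - al) ->
     `| I_f f lam al a b | <= C *
       ((eps1 al lam p) `^ (1 / p) * (E_f f a b al q) `^ (1 / q)
        + (eps1 (1 - al) lam p) `^ (1 / p) * (F_f f a b al q) `^ (1 / q))) /\
  (al * lam <= 1 - lam * (1 - al) <= 1 - al ->
     `| I_f f lam al a b | <= C *
       ((eps1 al lam p) `^ (1 / p) * (E_f f a b al q) `^ (1 / q)
        + (eps2 (1 - al) lam p) `^ (1 / p) * (F_f f a b al q) `^ (1 / q))) /\
  (1 - al <= al * lam <= 1 - lam * (1 - al) ->
     `| I_f f lam al a b | <= C *
       ((eps2 al lam p) `^ (1 / p) * (E_f f a b al q) `^ (1 / q)
        + (eps1 (1 - al) lam p) `^ (1 / p) * (F_f f a b al q) `^ (1 / q))).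
Proof.
move=> HI Hd Ha Hb ab _ /andP[al0 al1] /andP[lam0 lam1] /andP[s0 s1] q1 pq [g0 gc] C.
have q0 : 0 < q by apply: lt_trans q1.
have p0 : 0 < p.
  have : 0 < p^-1 by rewrite -[p^-1](addrK q^-1) pq subr_gt0 invf_lt1.
  by rewrite invr_gt0.
set D := b - a.
have D0 : 0 < D by rewrite subr_gt0.
have dfab : forall y, a <= y <= b -> derivable f y 1.
  by move=> y hy; apply: Hd; exact: int_seg HI Ha Hb hy.
have isd : forall y, a <= y <= b -> is_derive y (1:R) f (derive1 f y).
  by move=> y hy; rewrite derive1E; apply: derivableP; exact: dfab.
have cfy : forall y, a <= y <= b -> {for y, continuous f}.
  by move=> y hy; exact/differentiable_continuous/derivable1_diffP/dfab.
have cf : {within `[a, b], continuous f}.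
  apply: continuous_in_subspaceT => y /set_mem /=; rewrite in_itv/= => hy; exact: cfy.
have intf : lebesgue_measure.-integrable `[a, b] (EFin \o f).
  by apply: continuous_compact_integrable => //; exact: segment_compact.
pose F := fun y => parameterized_integral lebesgue_measure a y f.
have cF : {within `[a, b], continuous F}.
  exact: parameterized_integral_continuous (ltW ab) intf.
have dF : forall y, a < y < b -> is_derive y (1:R) F (f y).
  move=> y /andP[ay yb].
  have := continuous_FTC1_closed yb intf.
  move=> /= /(_ ay (cfy y _)) [].
    by rewrite (ltW ay) (ltW yb).
  move=> h1 h2; apply: (DeriveDef h1); rewrite -derive1E; exact: h2.
set c := al * a + (1 - al) * b.
have caE : c - a = (1 - al) * D by rewrite /c /D; ring.
have bcE : b - c = al * D by rewrite /c /D; ring.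
have ac : a <= c by rewrite -subr_ge0 caE; apply: mulr_ge0; lra.
have cb : c <= b by rewrite -subr_ge0 bcE; apply: mulr_ge0; lra.
set g := fun x => `|derive1 f x| `^ q.
have conc : forall x0 x1, a <= x0 -> x1 <= b ->
  forall u v t, u \in `[x0, x1] -> v \in `[x0, x1] -> 0 <= t <= 1 ->
     t * g u + (1 - t) * g v <= g (t * u + (1 - t) * v).
  move=> x0 x1 ax0 x1b u v t ui vi t01.
  have ui' : u \in `[a, b] by move: ui; rewrite !in_itv/= => /andP[? ?]; apply/andP; split; lra.
  have vi' : v \in `[a, b] by move: vi; rewrite !in_itv/= => /andP[? ?]; apply/andP; split; lra.
  apply: le_trans (gc u v t ui' vi' t01); apply: lerD; apply: ler_wpM2r.
  - exact: g0.
  - by apply: le_powRs => //; rewrite s0 s1.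
  - exact: g0.
  - apply: le_powRs; last by rewrite s0 s1.
    by move: t01 => /andP[? ?]; apply/andP; split; lra.
have pieceG : forall (x0 x1 z : R) e, a <= x0 -> x0 <= x1 -> x1 <= b ->
  spow p ((x1 - z) / D) - spow p ((x0 - z) / D) = e ->
  `|((x1 - z) / D * f x1 - F x1 / D) - ((x0 - z) / D * f x0 - F x0 / D)| <=
    D * (1 / (p + 1)) `^ (1 / p) * (e `^ (1 / p) * ((x1 - x0) / D * g ((x0 + x1) / 2)) `^ (1 / q)).
  move=> x0 x1 z e ax0 x01 x1b He.
  have [<-|x01'] := eqVneq x0 x1.
    rewrite subrr normr0 mulr_ge0 ?powR_ge0// mulr_ge0 ?(ltW D0) ?powR_ge0//.
  have {x01'}x01' : x0 < x1 by rewrite lt_neqAle x01' x01.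
  have [sg hsg] := @supergrad R g x0 x1 x01' (conc x0 x1 ax0 x1b).
  have e0 : 0 <= e.
    rewrite -He subr_ge0 ltW// spow_lt// ltr_pM2r ?invr_gt0//.
    by rewrite ltrBlDr subrK.
  have M0 : 0 <= g ((x0 + x1) / 2) by apply: g0; rewrite in_itv/=; apply/andP; split; lra.
  have := @piece R p q (fun y => (y - z) / D * f y - F y / D) (derive1 f) x0 x1 z D
     (g ((x0 + x1) / 2)) sg q1 pq D0 x01'.
  have E : x1 - x0 = (x1 - x0) / D * D by rewrite divfK ?gt_eqF.
  rewrite {1}E He piece_fin//; last by apply: divr_ge0; lra.
  apply.
  - apply: Ucont.
    + apply: continuous_subspaceW cf => y /=; rewrite !in_itv/= => /andP[? ?].
      by apply/andP; split; lra.
    + apply: continuous_subspaceW cF => y /=; rewrite !in_itv/= => /andP[? ?].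
      by apply/andP; split; lra.
  - move=> y; rewrite in_itv/= => /andP[? ?].
    apply: Uderiv; first by rewrite gt_eqF.
      by apply: isd; apply/andP; split; lra.
    by apply: dF; apply/andP; split; lra.
  - move=> y yi; apply: hsg.
    by move: yi; rewrite !in_itv/= => /andP[? ?]; apply/andP; split; lra.
  - exact: M0.
have Fa : F a = 0 by rewrite /F /parameterized_integral set_itv1 Rintegral_set1.
have gz : s != 1 -> forall m, m \in `[a, b] -> g m = 0.
  move=> sn1 m mi.
  have h01 : (0 <= 1 / 2 :> R) && (1 / 2 <= 1 :> R) by apply/andP; split; lra.
  have := gc m m (1 / 2) mi mi h01.
  have -> : 1 / 2 * m + (1 - 1 / 2) * m = m by field.
  have -> : 1 - 1 / 2 = 1 / 2 :> R by field.
  have k : 1 / 2 < (1 / 2) `^ s.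
    apply: lt_powRs; first by apply/andP; split; lra.
    by rewrite s0 lt_neqAle sn1 s1.
  have gm0 := g0 m mi.
  rewrite -/(g m) => h.
  apply/eqP; rewrite eq_le gm0 andbT.
  nra.
set z1 := a + al * lam * D.
set z2 := a + (1 - lam * (1 - al)) * D.
have key : forall e1 e2,
  spow p ((c - z1) / D) - spow p ((a - z1) / D) = e1 ->
  spow p ((b - z2) / D) - spow p ((c - z2) / D) = e2 ->
  `| I_f f lam al a b | <= C *
       (e1 `^ (1 / p) * (E_f f a b al q) `^ (1 / q)
        + e2 `^ (1 / p) * (F_f f a b al q) `^ (1 / q)).
  move=> e1 e2 H1 H2.
  have h1 := pieceG a c z1 e1 (lexx a) ac cb H1.
  have h2 := pieceG c b z2 e2 ac cb (lexx b) H2.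
  have EfE : E_f f a b al q = (c - a) / D * g ((a + c) / 2).
    have Em : ((1 - al) * b + (1 + al) * a) / 2 = (a + c) / 2 by rewrite /c; ring.
    rewrite /E_f Em caE mulfK; first by [].
    exact: lt0r_neq0.
  have FfE : F_f f a b al q = (b - c) / D * g ((c + b) / 2).
    have Em : ((2 - al) * b + al * a) / 2 = (c + b) / 2 by rewrite /c; ring.
    rewrite /F_f bcE mulfK; last exact: lt0r_neq0.
    by rewrite /g; congr (_ * `|derive1 f _| `^ _).
  have Iid : I_f f lam al a b =
    ((c - z1) / D * f c - F c / D - ((a - z1) / D * f a - F a / D)) +
    ((b - z2) / D * f b - F b / D - ((c - z2) / D * f c - F c / D)).
    rewrite /I_f Fa.
    change (Rintegral lebesgue_measure `[a, b] f) with (F b).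
    rewrite /z1 /z2 /c /D; field.
    by rewrite subr_eq0 gt_eqF.
  rewrite Iid EfE FfE; apply: le_trans (ler_normD _ _) _.
  apply: le_trans (lerD h1 h2) _.
  rewrite -mulrDr.
  have [s1'|sn1] := eqVneq s 1.
    by rewrite /C s1' subrr mul0r powRr0 mulr1.
  have cm1 : (a + c) / 2 \in `[a, b] by apply: mid_in.
  have cm2 : (c + b) / 2 \in `[a, b] by apply: mid_in.
  have q10 : 1 / q != 0 by rewrite div1r invr_eq0 gt_eqF.
  rewrite (gz sn1 _ cm1) (gz sn1 _ cm2) !mulr0 (powR0 q10) !mulr0 addr0 !mulr0.
  exact: lexx.
have u0E : (a - z1) / D = - (al * lam) by rewrite /z1; field; rewrite gt_eqF.
have v1E : (b - z2) / D = (1 - al) * lam by rewrite /z2 /D; field; rewrite subr_eq0 gt_eqF.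
split; [|split].
- move=> /andP[h1 h2]; apply: key.
  + have -> : (c - z1) / D = 1 - al - al * lam by rewrite /z1 /c /D; field; rewrite subr_eq0 gt_eqF.
    rewrite u0E spow_pos// ?spow_neg// ?opprK /eps1; first by rewrite addrC.
    * by rewrite oppr_le0 mulr_ge0.
    * lra.
  + have -> : (c - z2) / D = - (1 - (1 - al) - (1 - al) * lam).
      by rewrite /z2 /c /D; field; rewrite subr_eq0 gt_eqF.
    rewrite v1E spow_pos// ?spow_neg// ?opprK /eps1 //.
    * rewrite oppr_le0; nra.
    * by rewrite mulr_ge0// subr_ge0.
- move=> /andP[h1 h2]; apply: key.
  + have -> : (c - z1) / D = 1 - al - al * lam by rewrite /z1 /c /D; field; rewrite subr_eq0 gt_eqF.
    rewrite u0E spow_pos// ?spow_neg// ?opprK /eps1; first by rewrite addrC.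
    * by rewrite oppr_le0 mulr_ge0.
    * lra.
  + have -> : (c - z2) / D = (1 - al) * lam - 1 + (1 - al).
      by rewrite /z2 /c /D; field; rewrite subr_eq0 gt_eqF.
    rewrite v1E spow_pos// ?spow_pos// /eps2 //.
    * nra.
    * by rewrite mulr_ge0// subr_ge0.
- move=> /andP[h1 h2]; apply: key.
  + have -> : (c - z1) / D = - (al * lam - 1 + al) by rewrite /z1 /c /D; field; rewrite subr_eq0 gt_eqF.
    rewrite u0E spow_neg// ?spow_neg// ?opprK /eps2; first by rewrite addrC.
    * by rewrite oppr_le0 mulr_ge0.
    * rewrite oppr_le0; lra.
  + have -> : (c - z2) / D = - (1 - (1 - al) - (1 - al) * lam).
      by rewrite /z2 /c /D; field; rewrite subr_eq0 gt_eqF.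
    rewrite v1E spow_pos// ?spow_neg// ?opprK /eps1 //.
    * rewrite oppr_le0; nra.
    * by rewrite mulr_ge0// subr_ge0.
Qed.
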